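(* Let $R$ be a hyperring. The following are equivalent: (i) $Spec(R)$ with the Zariski topology is a $T_1$-space; (ii) $\dim(R)=0$, i.e. there are no prime hyperideals $P\subsetneq Q$ of $R$ (equivalently every prime hyperideal is maximal); (iii) $Spec(R)$ is a Hausdorff space.
   Context: Standing conventions. A hyperring means a commutative Krasner hyperring with identity: a set $R$ with a hyperoperation $+:R\times R\to\mathcal P^*(R)$ (nonempty subsets; for subsets $A,B$ one sets $A+B=\bigcup_{a\in A,b\in B}a+b$) and a binary operation $\cdot$ such that: $+$ is associative and commutative; there is $0\in R$ with $0+x=\{x\}$ for all $x$; every $x$ has a unique $-x$ with $0\in x+(-x)$; $z\in x+y$ implies $y\in -x+z$ and $x\in z-y$; $(R,\cdot)$ is a commutative monoid with identity $1$; $0\cdot x=0$; and $x(y+z)=xy+xz$. A hyperideal of $R$ is a nonempty $I\subseteq R$ with $a-b\subseteq I$ and $ra\in I$ for all $a,b\in I$, $r\in R$. A proper hyperideal $P$ is prime if $ab\in P$ implies $a\in P$ or $b\in P$; maximal hyperideals are defined as usual. $Spec(R)$ is the set of prime hyperideals of $R$; for $S\subseteq R$, $V(S)=\{P\in Spec(R): S\subseteq P\}$. The Zariski topology on $Spec(R)$ is the topology whose closed sets are the sets $V(I)$, $I$ a hyperideal of $R$. *)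

(* Defs.v *)
(** Commutative Krasner hyperring with identity.
    [hadd x y z] means  z \in x + y. *)
Record hyperring := HyperRing {
  carrier :> Type;
  hadd : carrier -> carrier -> carrier -> Prop;
  hmul : carrier -> carrier -> carrier;
  hzero : carrier;
  hone : carrier;
  hneg : carrier -> carrier;
  hadd_nonempty : forall x y, exists z, hadd x y z;
  hadd_assoc : forall x y z w,
    (exists u, hadd x y u /\ hadd u z w) <-> (exists v, hadd y z v /\ hadd x v w);
  hadd_comm : forall x y z, hadd x y z <-> hadd y x z;
  hadd_0 : forall x y, hadd hzero x y <-> y = x;
  hadd_neg : forall x, hadd x (hneg x) hzero;
  hneg_unique : forall x y, hadd x y hzero -> y = hneg x;
  hadd_rev : forall x y z, hadd x y z -> hadd (hneg x) z y /\ hadd z (hneg y) x;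
  hmul_assoc : forall x y z, hmul x (hmul y z) = hmul (hmul x y) z;
  hmul_comm : forall x y, hmul x y = hmul y x;
  hmul_1 : forall x, hmul hone x = x;
  hmul_0 : forall x, hmul hzero x = hzero;
  hmul_distr : forall x y z w,
    (exists u, hadd y z u /\ w = hmul x u) <-> hadd (hmul x y) (hmul x z) w
}.

Section HyperIdeals.
Variable R : hyperring.

Definition hyperideal (I : R -> Prop) : Prop :=
  (exists a, I a) /\
  (forall a b c, I a -> I b -> hadd R a (hneg R b) c -> I c) /\
  (forall r a, I a -> I (hmul R r a)).

Definition proper (I : R -> Prop) : Prop := exists x, ~ I x.

Definition prime_hyperideal (P : R -> Prop) : Prop :=
  hyperideal P /\ proper P /\
  (forall a b, P (hmul R a b) -> P a \/ P b).

(** Points of Spec(R) are the prime hyperideals (as subsets of R);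
    two points are equal iff they have the same elements. *)
Definition same_set (P Q : R -> Prop) : Prop := forall x, P x <-> Q x.

Definition V (S : R -> Prop) (P : R -> Prop) : Prop :=
  prime_hyperideal P /\ forall x, S x -> P x.

(** A set of points is represented by a
    predicate on subsets of R, only its values on prime hyperideals matter. *)
Definition zariski_open (U : (R -> Prop) -> Prop) : Prop :=
  exists I, hyperideal I /\
    forall P, prime_hyperideal P -> (U P <-> ~ V I P).

Definition spec_T1 : Prop :=
  forall P Q, prime_hyperideal P -> prime_hyperideal Q -> ~ same_set P Q ->
    exists U, zariski_open U /\ U P /\ ~ U Q.

Definition spec_hausdorff : Prop :=
  forall P Q, prime_hyperideal P -> prime_hyperideal Q -> ~ same_set P Q ->
    exists U W, zariski_open U /\ zariski_open W /\ U P /\ W Q /\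
      forall X, prime_hyperideal X -> ~ (U X /\ W X).

Definition krull_dim_zero : Prop :=
  ~ exists P Q, prime_hyperideal P /\ prime_hyperideal Q /\
      (forall x, P x -> Q x) /\ ~ same_set P Q.

End HyperIdeals.

(* Main.v *)
Require Import Defs.
From Stdlib Require Import Classical.
From mathcomp Require all_boot classical_sets boolp.

Module ZornAux.
Import mathcomp.boot.all_boot mathcomp.classical.classical_sets mathcomp.classical.boolp.
Local Open Scope classical_set_scope.
Lemma zorn_sets (T:Type) (G : (T->Prop) -> Prop) :
  (forall X, G X -> exists x, X x) ->
  (forall F : (T->Prop)->Prop,
     (forall X, F X -> G X \/ forall x, ~X x) ->
     (forall X Y, F X -> F Y -> (forall x, X x -> Y x) \/ (forall x, Y x -> X x)) ->
     G (fun x => exists X, F X /\ X x) \/ forall x, ~ exists X, F X /\ X x) ->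
  (exists X, G X) ->
  exists M, G M /\ forall N, G N -> (forall x, M x -> N x) -> forall x, N x -> M x.
Proof.
move=> HG Hch [X0 GX0].
have := @Zorn_bigcup T (fun B => G B \/ forall x, ~ B x).
case.
- move=> F FP Ftot.
  have := Hch F (fun X FX => FP X FX) (fun X Y FX FY => Ftot X Y FX FY).
  have E : (fun x => exists X, F X /\ X x) = \bigcup_(X in F) X.
    by apply: funext => x; apply: propext; split; [case=> X [? ?]; exists X| case=> X ? ?; exists X].
  rewrite E; case=> H; [left|right] => //.
  by move=> x Hx; apply: (H x); rewrite -E in Hx; case: Hx => X [FX Xx]; exists X.
- move=> A [PA Amax].
  have GA : G A.
    case: PA => // HA; exfalso; apply: (Amax X0); last by left.
    split; first by move=> x /HA.
    move=> sub; have [x Xx] := HG _ GX0; apply: (HA x); exact: sub x Xx.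
  exists A; split => // N GN AN x Nx.
  apply: contrapT => nAx; apply: (Amax N); last by left.
  split => // NA; apply: nAx; exact: NA x Nx.
Qed.
End ZornAux.

Lemma mul_0r (R : hyperring) (x : R) : hmul R x (hzero R) = hzero R.
Proof. rewrite hmul_comm. apply hmul_0. Qed.

Lemma mul_1r (R : hyperring) (x : R) : hmul R x (hone R) = x.
Proof. rewrite hmul_comm. apply hmul_1. Qed.

Lemma neg0 (R : hyperring) : hneg R (hzero R) = hzero R.
Proof. symmetry. apply hneg_unique. apply hadd_0. reflexivity. Qed.

Lemma neg_mul (R : hyperring) (x y : R) : hmul R (hneg R x) y = hneg R (hmul R x y).
Proof.
  rewrite (hmul_comm R (hneg R x) y), (hmul_comm R x y).
  apply hneg_unique.
  rewrite <- (mul_0r R y).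
  apply (proj1 (hmul_distr R y x (hneg R x) (hmul R y (hzero R)))).
  exists (hzero R). split; [apply hadd_neg | reflexivity].
Qed.

Lemma mul_ACA (R : hyperring) (a b c d : R) :
  hmul R (hmul R a b) (hmul R c d) = hmul R (hmul R a c) (hmul R b d).
Proof.
  rewrite <- !hmul_assoc. f_equal.
  rewrite !hmul_assoc. f_equal. apply hmul_comm.
Qed.

Fixpoint hpow (R : hyperring) (a : R) (n : nat) : R :=
  match n with O => hone R | S n => hmul R a (hpow R a n) end.

Lemma hpow_add (R : hyperring) (a : R) n m :
  hmul R (hpow R a n) (hpow R a m) = hpow R a (n + m).
Proof.
  induction n; simpl. apply hmul_1.
  rewrite <- hmul_assoc. rewrite IHn. reflexivity.
Qed.

Lemma ideal_0 (R : hyperring) (I : R -> Prop) : hyperideal R I -> I (hzero R).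
Proof.
  intros [[a Ia] [_ Hm]]. rewrite <- (hmul_0 R a). apply Hm. exact Ia.
Qed.

Lemma prime_pow (R : hyperring) (X : R -> Prop) (a : R) n :
  prime_hyperideal R X -> X (hpow R a n) -> X a.
Proof.
  intros HX. induction n; simpl; intros H.
  - rewrite <- (mul_1r R a). apply (proj2 (proj2 (proj1 HX))). exact H.
  - destruct (proj2 (proj2 HX) _ _ H); auto.
Qed.

Lemma principal_ideal (R : hyperring) (s : R) :
  hyperideal R (fun z => exists r, z = hmul R r s).
Proof.
  split; [|split].
  - exists s, (hone R). symmetry. apply hmul_1.
  - intros a b c [r1 ->] [r2 ->] Hc.
    rewrite <- neg_mul in Hc.
    rewrite (hmul_comm R r1 s), (hmul_comm R (hneg R r2) s) in Hc.
    apply (hmul_distr R) in Hc. destruct Hc as [u [_ ->]].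
    exists u. apply hmul_comm.
  - intros r a [r' ->]. exists (hmul R r r'). apply hmul_assoc.
Qed.

Lemma colon_ideal (R : hyperring) (M : R -> Prop) (y : R) :
  hyperideal R M -> hyperideal R (fun z => M (hmul R z y)).
Proof.
  intros HM. split; [|split].
  - exists (hzero R). rewrite hmul_0. apply ideal_0; auto.
  - intros z1 z2 c H1 H2 Hc.
    assert (Hd : hadd R (hmul R y z1) (hmul R y (hneg R z2)) (hmul R y c)).
    { apply (hmul_distr R). exists c. auto. }
    rewrite (hmul_comm R y (hneg R z2)), neg_mul, (hmul_comm R y z1),
      (hmul_comm R y c) in Hd.
    exact (proj1 (proj2 HM) _ _ _ H1 H2 Hd).
  - intros r a Ha. rewrite <- hmul_assoc. apply (proj2 (proj2 HM)). exact Ha.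
Qed.

Lemma not_P1 (R : hyperring) (P : R -> Prop) : prime_hyperideal R P -> ~ P (hone R).
Proof.
  intros [[_ [_ Hm]] [[x Hx] _]] H1. apply Hx. rewrite <- (mul_1r R x). apply Hm. exact H1.
Qed.

Definition goodI (R : hyperring) (P : R -> Prop) (a : R) (I : R -> Prop) :=
  hyperideal R I /\ forall s n, ~ P s -> ~ I (hmul R s (hpow R a n)).

Lemma key (R : hyperring) (P : R -> Prop) (a : R) :
  krull_dim_zero R -> prime_hyperideal R P -> P a ->
  exists s n, ~ P s /\ hmul R s (hpow R a n) = hzero R.
Proof.
  intros Hd HP Pa.
  apply NNPP. intros Hno.
  assert (Hz : forall s n, ~ P s -> hmul R s (hpow R a n) <> hzero R).
  { intros s n Hs He. apply Hno. exists s, n. auto. }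
  destruct (ZornAux.zorn_sets R (goodI R P a)) as [M [[HMi HMd] Mmax]].
  - intros X [[Hne _] _]. exact Hne.
  - intros F FG Ftot.
    destruct (classic (exists x X, F X /\ X x)) as [[x0 [X0 [FX0 X0x]]]|Hn].
    + left.
      assert (Gof : forall X x, F X -> X x -> goodI R P a X).
      { intros X x FX Xx. destruct (FG X FX) as [G|E]; auto. exfalso; apply (E x Xx). }
      split; [split; [|split]|].
      * exists x0, X0. auto.
      * intros b c d [X1 [F1 X1b]] [X2 [F2 X2c]] Hd'.
        destruct (Ftot X1 X2 F1 F2) as [S12|S21].
        -- exists X2. split; auto. apply (proj1 (proj2 (proj1 (Gof X2 c F2 X2c))) b c d); auto.
        -- exists X1. split; auto. apply (proj1 (proj2 (proj1 (Gof X1 b F1 X1b))) b c d); auto.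
      * intros r b [X1 [F1 X1b]]. exists X1. split; auto.
        apply (proj2 (proj2 (proj1 (Gof X1 b F1 X1b)))). auto.
      * intros s n Hs [X1 [F1 X1b]]. apply (proj2 (Gof X1 _ F1 X1b) s n Hs X1b).
    + right. intros x [X [FX Xx]]. apply Hn. exists x, X. auto.
  - exists (fun x => x = hzero R). split; [split; [|split]|].
    + exists (hzero R). reflexivity.
    + intros b c d -> -> Hd'. rewrite neg0 in Hd'. apply (hadd_0 R) in Hd'. exact Hd'.
    + intros r b ->. apply mul_0r.
    + intros s n Hs. apply Hz. exact Hs.
  -
    assert (MP : forall z, M z -> P z).
    { intros z Mz. apply NNPP. intros nPz. apply (HMd z 0 nPz). simpl. rewrite mul_1r. exact Mz. }
    assert (Mprime : prime_hyperideal R M).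
    { split; [exact HMi| split].
      - exists (hone R). intros M1. apply (HMd (hone R) 0 (not_P1 R P HP)). simpl.
        rewrite mul_1r. exact M1.
      - intros x y Mxy.
        destruct (classic (M x)) as [Mx|nMx]; [left; exact Mx| right].
        assert (HCy := colon_ideal R M y HMi).
        assert (CyM : forall z, M z -> M (hmul R z y)).
        { intros z Mz. rewrite hmul_comm. apply (proj2 (proj2 HMi)). exact Mz. }
        destruct (classic (goodI R P a (fun z => M (hmul R z y)))) as [Gy|nGy].
        { exfalso. apply nMx. apply (Mmax _ Gy CyM x Mxy). }
        assert (Hex : exists s n, ~ P s /\ M (hmul R (hmul R s (hpow R a n)) y)).
        { apply NNPP. intros Hn. apply nGy. split; auto.
          intros s n Hs Hm. apply Hn. exists s, n. auto. }
        destruct Hex as [s [n [Hs Hm]]].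
        set (t := hmul R s (hpow R a n)) in *.
        assert (Gt : goodI R P a (fun z => M (hmul R z t))).
        { split. apply colon_ideal; auto.
          intros s' n' Hs' Hm'. unfold t in Hm'. rewrite mul_ACA, hpow_add in Hm'.
          apply (HMd (hmul R s' s) (n' + n)); auto.
          intros Hp. destruct (proj2 (proj2 HP) _ _ Hp); auto. }
        apply (Mmax _ Gt).
        + intros z Mz. rewrite hmul_comm. apply (proj2 (proj2 HMi)). exact Mz.
        + rewrite hmul_comm. exact Hm. }
    apply Hd. exists M, P. split; [exact Mprime|split; [exact HP|split; [exact MP|]]].
    intros Hs. apply (HMd (hone R) 1 (not_P1 R P HP)). simpl.
    rewrite hmul_1, mul_1r. apply Hs. exact Pa.
Qed.

Lemma same_sym (R : hyperring) (P Q : R -> Prop) : same_set R P Q -> same_set R Q P.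
Proof. intros H x. split; apply H. Qed.

Theorem mainTheorem9 (R : hyperring) :
  (spec_T1 R <-> krull_dim_zero R) /\ (krull_dim_zero R <-> spec_hausdorff R).
Proof.
  split; split.
  - intros HT [P [Q [HP [HQ [PQ nPQ]]]]].
    destruct (HT Q P HQ HP (fun H => nPQ (same_sym R _ _ H))) as [U [[I [HI HU]] [UQ nUP]]].
    apply (proj1 (HU Q HQ) UQ).
    assert (VP : V R I P).
    { apply NNPP. intros nV. apply nUP. apply (HU P HP). exact nV. }
    split; auto. intros x Ix. apply PQ. apply (proj2 VP). exact Ix.
  - intros Hd P Q HP HQ nPQ.
    exists (fun X => ~ V R Q X). split; [|split].
    + exists Q. split; [exact (proj1 HQ)|]. intros X _. tauto.
    + intros [_ QP]. apply Hd. exists Q, P. split; auto. split; auto. split; auto.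
      intros H. apply nPQ. apply same_sym. exact H.
    + intros H. apply H. split; auto.
  - intros Hd P Q HP HQ nPQ.
    assert (Ha : exists a, P a /\ ~ Q a).
    { apply NNPP. intros Hn. apply Hd. exists P, Q. split; auto. split; auto. split; auto.
      intros x Px. apply NNPP. intros nQx. apply Hn. exists x. auto. }
    destruct Ha as [a [Pa nQa]].
    destruct (key R P a Hd HP Pa) as [s [n [nPs Hz]]].
    exists (fun X => ~ V R (fun z => exists r, z = hmul R r s) X),
           (fun X => ~ V R (fun z => exists r, z = hmul R r a) X).
    split; [|split; [|split; [|split]]].
    + exists (fun z => exists r, z = hmul R r s). split; [apply principal_ideal|]. tauto.
    + exists (fun z => exists r, z = hmul R r a). split; [apply principal_ideal|]. tauto.
    + intros [_ H]. apply nPs. apply H. exists (hone R). symmetry. apply hmul_1.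
    + intros [_ H]. apply nQa. apply H. exists (hone R). symmetry. apply hmul_1.
    + intros X HX [U W].
      assert (X0 : X (hmul R s (hpow R a n))). { rewrite Hz. apply ideal_0. exact (proj1 HX). }
      destruct (proj2 (proj2 HX) _ _ X0) as [Xs|Xa].
      * apply U. split; auto. intros z [r ->]. apply (proj2 (proj2 (proj1 HX))). exact Xs.
      * apply W. split; auto. intros z [r ->]. apply (proj2 (proj2 (proj1 HX))).
        apply (prime_pow R X a n HX Xa).
  - intros HH [P [Q [HP [HQ [PQ nPQ]]]]].
    destruct (HH P Q HP HQ nPQ) as [U [W [[I [HI HU]] [[J [HJ HW]] [UP [WQ Hdis]]]]]].
    apply (Hdis P HP). split; auto.
    apply (HW P HP). intros [_ JP]. apply (proj1 (HW Q HQ) WQ). split; auto.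
Qed.
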